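(* Let $k$ be an infinite field with $\operatorname{char}k\neq 2$, let $a\in k\setminus k^2$, let $b_1,\dots,b_n\in k\setminus\{0\}$, and let $L_0=k(s_i,t_i:1\le i\le n)$ be a field extension of $k$ with $\operatorname{trdeg}_k(L_0)=n$ satisfying $s_i^2-at_i^2=b_i$ for $1\le i\le n$. Then $L_0$ is $k$-rational (respectively, stably $k$-rational, $k$-unirational) if and only if $(a,b_i)_{2,k}=0$ for all $1\le i\le n$.
   Context: A finitely generated field extension $L/k$ is $k$-rational if it is purely transcendental over $k$; stably $k$-rational if $L(y_1,\dots,y_m)$ is $k$-rational for some $y_1,\dots,y_m$ algebraically independent over $L$; $k$-unirational if $L$ is $k$-isomorphic to a subfield of a $k$-rational field. $(u,v)_{2,k}$ is the class in $\mathrm{Br}(k)$ of the quaternion algebra generated over $k$ by $U,V$ with $U^2=u$, $V^2=v$, $UV=-VU$; it is $0$ iff there exist $x,y\in k$ with $ux^2+vy^2=1$. *)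

(* Defs.v *)
From HB Require Import structures.
From mathcomp Require Import all_boot all_order all_algebra.
From mathcomp Require Import mpoly.
Set Implicit Arguments. Unset Strict Implicit. Unset Printing Implicit Defensive.
Import GRing.Theory.
Local Open Scope ring_scope.

(* A field extension L/k is given by a field L and a ring morphism
   iota : k -> L (automatically injective). *)

Definition alg_indep (k L : fieldType) (iota : k -> L) (m : nat)
  (x : 'I_m -> L) : Prop :=
  forall p : {mpoly k[m]}, p != 0 -> mmap iota x p != 0.

Definition in_gen_subfield (k L : fieldType) (iota : k -> L)
  (S : L -> Prop) (y : L) : Prop :=
  forall P : L -> Prop,
    (forall c, P (iota c)) -> (forall z, S z -> P z) ->
    (forall u v, P u -> P v -> P (u - v)) ->
    (forall u v, P u -> P v -> P (u * v)) ->
    (forall u, P u -> P u^-1) -> P y.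

Definition generates (k L : fieldType) (iota : k -> L) (S : L -> Prop) : Prop :=
  forall y : L, in_gen_subfield iota S y.

Definition range_of (L : Type) (m : nat) (x : 'I_m -> L) : L -> Prop :=
  fun z => exists i, z = x i.

Definition trdeg_eq (k L : fieldType) (iota : k -> L) (n : nat) : Prop :=
  (exists x : 'I_n -> L, alg_indep iota x) /\
  (forall y : 'I_n.+1 -> L, ~ alg_indep iota y).

Definition k_rational (k L : fieldType) (iota : k -> L) : Prop :=
  exists m (x : 'I_m -> L), alg_indep iota x /\ generates iota (range_of x).

Definition stably_k_rational (k L : fieldType) (iota : k -> L) : Prop :=
  exists (m : nat) (M : fieldType) (j : {rmorphism L -> M}) (y : 'I_m -> M),
    alg_indep j y /\ generates j (range_of y) /\ k_rational (j \o iota).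

Definition k_unirational (k L : fieldType) (iota : k -> L) : Prop :=
  exists (M : fieldType) (iotaM : k -> M) (f : {rmorphism L -> M}),
    k_rational iotaM /\ (forall c, f (iota c) = iotaM c).

(* (u,v)_{2,k} = 0 in Br(k), via the criterion given in the paper's context. *)
Definition quat_trivial (k : fieldType) (u v : k) : Prop :=
  exists x y : k, u * x ^+ 2 + v * y ^+ 2 = 1.

Definition infinite_field (k : fieldType) : Prop :=
  forall s : seq k, exists x : k, x \notin s.

(* Main.v *)
Require Import Defs.
From HB Require Import structures.
From mathcomp Require Import all_boot all_order all_algebra.
From mathcomp Require Import mpoly.
From mathcomp Require Import ring lra zify.
Local Open Scope ring_scope.

Module Aux.
Set Implicit Arguments. Unset Strict Implicit. Unset Printing Implicit Defensive.
Import GRing.Theory.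
Local Open Scope ring_scope.

Section Gen.
Variables (k L : fieldType) (iota : {rmorphism k -> L}).
Implicit Types S : L -> Prop.

Lemma gen_base S z : S z -> in_gen_subfield iota S z.
Proof. by move=> Sz P _ HS _ _ _; apply: HS. Qed.
Lemma gen_const S c : in_gen_subfield iota S (iota c).
Proof. by move=> P H _ _ _ _; apply: H. Qed.
Lemma gen_sub S u v : in_gen_subfield iota S u -> in_gen_subfield iota S v ->
  in_gen_subfield iota S (u - v).
Proof. by move=> hu hv P h1 h2 h3 h4 h5; apply: h3 (hu P h1 h2 h3 h4 h5) (hv P h1 h2 h3 h4 h5). Qed.
Lemma gen_mul S u v : in_gen_subfield iota S u -> in_gen_subfield iota S v ->
  in_gen_subfield iota S (u * v).
Proof. by move=> hu hv P h1 h2 h3 h4 h5; apply: h4 (hu P h1 h2 h3 h4 h5) (hv P h1 h2 h3 h4 h5). Qed.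
Lemma gen_inv S u : in_gen_subfield iota S u -> in_gen_subfield iota S u^-1.
Proof. by move=> hu P h1 h2 h3 h4 h5; apply: h5 (hu P h1 h2 h3 h4 h5). Qed.
Lemma gen_0 S : in_gen_subfield iota S 0.
Proof. by rewrite -(rmorph0 iota); apply: gen_const. Qed.
Lemma gen_1 S : in_gen_subfield iota S 1.
Proof. by rewrite -(rmorph1 iota); apply: gen_const. Qed.
Lemma gen_add S u v : in_gen_subfield iota S u -> in_gen_subfield iota S v ->
  in_gen_subfield iota S (u + v).
Proof.
move=> hu hv; have -> : u + v = u - (0 - v) by rewrite sub0r opprK.
by apply: gen_sub => //; apply: gen_sub => //; apply: gen_0.
Qed.
Lemma gen_div S u v : in_gen_subfield iota S u -> in_gen_subfield iota S v ->
  in_gen_subfield iota S (u / v).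
Proof. by move=> hu hv; apply: gen_mul => //; apply: gen_inv. Qed.

Lemma gen_mono S S' y : (forall z, S z -> in_gen_subfield iota S' z) ->
  in_gen_subfield iota S y -> in_gen_subfield iota S' y.
Proof.
move=> H hy; apply: (hy (in_gen_subfield iota S')) => //.
- by move=> c; apply: gen_const.
- by move=> u v; apply: gen_sub.
- by move=> u v; apply: gen_mul.
- by move=> u; apply: gen_inv.
Qed.

Lemma gen_trans S S' : generates iota S ->
  (forall z, S z -> in_gen_subfield iota S' z) -> generates iota S'.
Proof. by move=> hS H y; apply: gen_mono H (hS y). Qed.

Section MM.
Variables (m : nat) (u : 'I_m -> L).
Lemma mm1 : mmap iota u 1 = 1.
Proof. exact: rmorph1. Qed.
Lemma mm0 : mmap iota u 0 = 0.
Proof. exact: rmorph0. Qed.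
Lemma mmM p q : mmap iota u (p * q) = mmap iota u p * mmap iota u q.
Proof. exact: rmorphM. Qed.
Lemma mmB p q : mmap iota u (p - q) = mmap iota u p - mmap iota u q.
Proof. exact: rmorphB. Qed.
Lemma mmD p q : mmap iota u (p + q) = mmap iota u p + mmap iota u q.
Proof. exact: rmorphD. Qed.
Lemma mmXn p e : mmap iota u (p ^+ e) = mmap iota u p ^+ e.
Proof. exact: rmorphXn. Qed.
Lemma mmZ c p : mmap iota u (c *: p) = iota c * mmap iota u p.
Proof. exact: mmapZ. Qed.
Lemma mmC c : mmap iota u c%:MP = iota c.
Proof. exact: mmapC. Qed.
Lemma mmXi i : mmap iota u 'X_i = u i.
Proof. by rewrite mmapX mmap1U. Qed.
End MM.

Lemma frac_repr m (u : 'I_m -> L) y : in_gen_subfield iota (range_of u) y ->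
  exists P Q : {mpoly k[m]}, mmap iota u Q != 0 /\ y = mmap iota u P / mmap iota u Q.
Proof.
move=> H; apply: (H (fun y => exists P Q : {mpoly k[m]}, mmap iota u Q != 0 /\ y = mmap iota u P / mmap iota u Q)).
- move=> c; exists c%:MP, 1; rewrite mmC mm1 oner_neq0 divr1; split => //.
- move=> z [i ->]; exists 'X_i, 1; rewrite mm1 oner_neq0 divr1 mmXi; split => //.
- move=> a b [P1 [Q1 [h1 ->]]] [P2 [Q2 [h2 ->]]].
  exists (P1 * Q2 - P2 * Q1), (Q1 * Q2); rewrite mmB !mmM mulf_neq0 //.
  split => //; field; rewrite h1 h2 //.
- move=> a b [P1 [Q1 [h1 ->]]] [P2 [Q2 [h2 ->]]].
  exists (P1 * P2), (Q1 * Q2); rewrite !mmM mulf_neq0 //.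
  split => //; field; rewrite h1 h2 //.
- move=> a [P1 [Q1 [h1 ->]]].
  have [e|ne] := eqVneq (mmap iota u P1) 0.
    by exists 0, 1; rewrite e mul0r invr0 mm0 mm1 oner_neq0 mul0r.
  exists Q1, P1; split => //; rewrite invf_div //.
Qed.

End Gen.


Section Boxed.
Variables (k : fieldType) (n : nat).
Implicit Types p q : {mpoly k[n]}.

Definition boxed (N : nat) p := forall mn, mn \in msupp p -> forall i, (mn i <= N)%N.

Lemma boxed_mono N N' p : (N <= N')%N -> boxed N p -> boxed N' p.
Proof. by move=> le h mn H i; apply: leq_trans (h mn H i) le. Qed.

Lemma boxed0 N : boxed N 0.
Proof. by move=> mn; rewrite msupp0. Qed.

Lemma boxed_size p : boxed (msize p) p.
Proof.
move=> mn H i; apply: ltnW; apply: leq_ltn_trans (msize_mdeg_lt H).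
by rewrite mdegE (bigD1 i) //= leq_addr.
Qed.

Lemma boxedD N p q : boxed N p -> boxed N q -> boxed N (p + q).
Proof.
move=> hp hq mn /msuppD_le; rewrite mem_cat => /orP [] H; [exact: hp | exact: hq].
Qed.

Lemma boxedN N p : boxed N p -> boxed N (- p).
Proof. by move=> hp mn; rewrite (perm_mem (msuppN p)); apply: hp. Qed.

Lemma boxedZ N c p : boxed N p -> boxed N (c *: p).
Proof. by move=> hp mn /msuppZ_le; apply: hp. Qed.

Lemma boxedM a b p q : boxed a p -> boxed b q -> boxed (a + b) (p * q).
Proof.
move=> hp hq mn /msuppM_le /allpairsP [[m1 m2] /= [H1 H2 ->]] i.
by rewrite mnmDE leq_add // ?hp ?hq.
Qed.

Lemma boxed1 N : boxed N 1.
Proof. by move=> mn; rewrite msupp1 inE => /eqP -> i; rewrite mnm0E. Qed.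

Lemma boxedXn a p e : boxed a p -> boxed (a * e) (p ^+ e).
Proof.
move=> hp; elim: e => [|e IH]; first by rewrite expr0; apply: boxed1.
by rewrite exprS mulnS; apply: boxedM.
Qed.

Lemma boxed_prod m (F : 'I_m -> {mpoly k[n]}) (a : 'I_m -> nat) :
  (forall j, boxed (a j) (F j)) -> boxed (\sum_j a j) (\prod_j F j).
Proof.
move=> h; apply: (big_rec2 (fun N p => boxed N p)); first exact: boxed1.
by move=> j N p _ hN; apply: boxedM.
Qed.

Lemma boxed_sum (I : finType) N (F : I -> {mpoly k[n]}) :
  (forall j, boxed N (F j)) -> boxed N (\sum_j F j).
Proof.
move=> h; apply: (big_rec (fun p => boxed N p)); first exact: boxed0.
by move=> j p _ hN; apply: boxedD.
Qed.

Lemma boxedX N (mn : 'X_{1..n}) : (forall i, mn i <= N)%N -> boxed N 'X_[mn].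
Proof. by move=> h m'; rewrite msuppX inE => /eqP ->. Qed.

Definition mon N (w : {ffun 'I_n -> 'I_N}) : 'X_{1..n} := [multinom (w i : nat) | i < n].

Lemma mon_inj N : injective (@mon N).
Proof.
move=> w1 w2 /mnmP h; apply/ffunP => i; apply: val_inj.
by have := h i; rewrite !mnmE.
Qed.

Lemma mon_le N (w : {ffun 'I_n -> 'I_N.+1}) i : (mon w i <= N)%N.
Proof. by rewrite mnmE -ltnS. Qed.

Lemma boxed_eq0 N p : boxed N p ->
  (forall w : {ffun 'I_n -> 'I_N.+1}, p@_(mon w) = 0) -> p = 0.
Proof.
move=> hb h; apply/mpolyP => mn; rewrite mcoeff0.
case: (boolP (mn \in msupp p)) => [H|]; last by move/memN_msupp_eq0.
pose w := [ffun i => (inord (mn i) : 'I_N.+1)].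
have -> : mn = mon w.
  by apply/mnmP => i; rewrite mnmE ffunE inordK // ltnS hb.
exact: h.
Qed.

Lemma coef_sum_mon N (c : {ffun 'I_n -> 'I_N} -> k) w0 :
  (\sum_w c w *: 'X_[mon w])@_(mon w0) = c w0.
Proof.
rewrite -/(mcoeff _ _) raddf_sum (bigD1 w0) //= mcoeffZ mcoeffX eqxx mulr1.
rewrite big1 ?addr0 // => w nw; rewrite mcoeffZ mcoeffX (inj_eq (@mon_inj N)).
by rewrite (negbTE nw) mulr0.
Qed.

End Boxed.

Lemma pow_diff m e A : ((A + e) ^ m <= A ^ m + m * e * (A + e) ^ m.-1)%N.
Proof.
elim: m => [|m IH] /=; first by rewrite !expn0 mul0n addn0.
rewrite [((A + e) ^ m.+1)%N]expnS [(A ^ m.+1)%N]expnS.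
apply: leq_trans (leq_mul (leqnn (A + e)) IH) _.
case: m {IH} => [|m] /=; first by rewrite !expn0; lia.
have h1 : (A ^ m.+1 <= (A + e) ^ m.+1)%N by rewrite leq_exp2r ?leq_addr.
rewrite [((A + e) ^ m.+1)%N]expnS in h1 *.
move: h1; set X := (A ^ m.+1)%N; set Z := ((A + e) ^ m)%N; nia.
Qed.

Lemma exp_mono a b e : (a <= b -> a ^ e <= b ^ e)%N.
Proof. by move=> h; elim: e => [|e IH]; rewrite ?expn0 // !expnS leq_mul. Qed.

Lemma count_ineq m c e : exists D : nat,
  ((m * c * D + e + 1) ^ m < (D + 1) ^ m + (m * c * D + 1) ^ m)%N.
Proof.
case: m => [|m]; first by exists 0%N; rewrite !expn0.
set K := (m.+1 * c + e + 1)%N.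
exists (m.+1 * e * K ^ m)%N; set D := (m.+1 * e * K ^ m)%N.
have h1 := pow_diff m.+1 e (m.+1 * c * D + 1).
have h2 : (m.+1 * c * D + 1 + e <= K * (D + 1))%N by rewrite /K; nia.
have h3 : ((m.+1 * c * D + 1 + e) ^ m <= K ^ m * (D + 1) ^ m)%N.
  by rewrite -expnMn; apply: exp_mono.
have h4 : ((D + 1) ^ m.+1 = (D + 1) * (D + 1) ^ m)%N by rewrite expnS.
have h5 : (0 < (D + 1) ^ m)%N by rewrite expn_gt0 addn1.
have -> : (m.+1 * c * D + e + 1 = m.+1 * c * D + 1 + e)%N by lia.
rewrite h4; move: h1 h3 h5; rewrite /D.
set P := ((_ + 1 + e) ^ m.+1)%N; set Q := ((_ + 1) ^ m.+1)%N.
set R := ((_ + 1 + e) ^ m)%N; set Y := ((_ + 1) ^ m)%N; set Km := (K ^ m)%N.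
nia.
Qed.



Section Key.
Variables (k L : fieldType) (iota : {rmorphism k -> L}) (m : nat) (u : 'I_m -> L).

Lemma mm_prod (I : finType) (F : I -> {mpoly k[m]}) (v : 'I_m -> L) :
  mmap iota v (\prod_i F i) = \prod_i mmap iota v (F i).
Proof. exact: rmorph_prod. Qed.
Lemma mm_sum (I : finType) (F : I -> {mpoly k[m]}) (v : 'I_m -> L) :
  mmap iota v (\sum_i F i) = \sum_i mmap iota v (F i).
Proof. exact: raddf_sum. Qed.

Hypothesis gen : generates iota (range_of u).
Variable F : {mpoly k[m]}.
Hypotheses (F0 : F != 0) (Fu : mmap iota u F = 0).

Lemma key (y : 'I_m -> L) : ~ alg_indep iota y.
Proof.
move=> hy.
have : forall j, exists PQ : {mpoly k[m]} * {mpoly k[m]},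
    mmap iota u PQ.2 != 0 /\ y j = mmap iota u PQ.1 / mmap iota u PQ.2.
  by move=> j; have [P [Q h]] := frac_repr (gen (y j)); exists (P, Q).
case/fin_all_exists => PQ hPQ.
pose P j := (PQ j).1; pose Q j := (PQ j).2.
pose c := (\max_j maxn (msize (P j)) (msize (Q j)))%N.
have bP j : boxed c (P j).
  have h : (msize (P j) <= c)%N.
    apply: leq_trans (leq_maxl _ (msize (Q j))) _.
    exact: (@leq_bigmax _ (fun j => maxn (msize (P j)) (msize (Q j))) j).
  exact: (boxed_mono h (boxed_size (p := P j))).
have bQ j : boxed c (Q j).
  have h : (msize (Q j) <= c)%N.
    apply: leq_trans (leq_maxr (msize (P j)) _) _.
    exact: (@leq_bigmax _ (fun j => maxn (msize (P j)) (msize (Q j))) j).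
  exact: (boxed_mono h (boxed_size (p := Q j))).
pose e := msize F.
have [D hD] := count_ineq m c e.
pose M0 := (m * c * D)%N.
pose N := (M0 + e)%N.
pose H (al : {ffun 'I_m -> 'I_D.+1}) := \prod_j (P j ^+ al j * Q j ^+ (D - al j)).
have bH al : boxed M0 (H al).
  have := @boxed_prod k m m (fun j => P j ^+ al j * Q j ^+ (D - al j))
    (fun j => (c * al j + c * (D - al j))%N) (fun j => boxedM (boxedXn (bP j)) (boxedXn (bQ j))).
  have -> : (\sum_j (c * al j + c * (D - al j)) = M0)%N.
    rewrite /M0 (eq_bigr (fun _ => c * D)%N).
      by rewrite sum_nat_const card_ord mulnA.
    by move=> j _; rewrite -mulnDr subnKC // -ltnS.
  by [].
pose S := {ffun 'I_m -> 'I_D.+1}.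
pose T := {ffun 'I_m -> 'I_M0.+1}.
pose U := {ffun 'I_m -> 'I_N.+1}.
pose R (x : (S + T)%type) : {mpoly k[m]} :=
  match x with inl al => H al | inr ga => F * 'X_[mon ga] end.
have bR x : boxed N (R x).
  case: x => [al|ga] /=.
    exact: (boxed_mono (leq_addr e M0) (bH al)).
  rewrite /N addnC; apply: boxedM (boxed_size (p:=F)) (boxedX (fun i => mon_le ga i)).
pose A : 'M[k]_(#|{: S + T}|, #|{: U}|) :=
  \matrix_(r, cl) (R (enum_val r))@_(mon (enum_val cl)).
have nfree : ~~ row_free A.
  have hc1 : #|{: S + T}| = ((D.+1)^m + (M0.+1)^m)%N.
    by rewrite card_sum !card_ffun !card_ord.
  have hc2 : #|{: U}| = ((N.+1)^m)%N.
    by rewrite !card_ffun !card_ord.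
  have h1 := rank_leq_col A.
  rewrite /row_free; apply/eqP => hr.
  move: h1; rewrite hr => h1.
  have h2 : ((D.+1)^m + (M0.+1)^m <= (N.+1)^m)%N by rewrite -hc2 -hc1.
  move: h2; rewrite leqNgt; apply/negP/negPn.
  by move: hD; rewrite /N /M0 !addn1.
have [v vker vnz] : exists2 v : 'rV_#|{: S + T}|, (v <= kermx A)%MS & v != 0.
  by apply/rowV0Pn; rewrite kermx_eq0.
have vA : v *m A = 0 by apply/sub_kermxP.
have Zdef : \sum_(x : S + T) v 0 (enum_rank x) *: R x = 0.
  apply: (boxed_eq0 (N:=N)).
    by apply: boxed_sum => x; apply: boxedZ.
  move=> w.
  have := congr1 (fun M : 'M[k]_(1, #|{: U}|) => M 0 (enum_rank w)) vA; rewrite mxE /= [RHS]mxE => eq0.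
  rewrite -[RHS]eq0 -/(mcoeff _ _) raddf_sum /=.
  rewrite [RHS](reindex (@enum_rank (S + T)%type)) /=; last first.
    by apply: onW_bij; exact: enum_rank_bij.
  apply: eq_bigr => x _; rewrite mcoeffZ mxE !enum_rankK //.
rewrite big_sumType /= in Zdef.
pose lam al := v 0 (enum_rank (inl al : (S + T)%type)).
pose mu ga := v 0 (enum_rank (inr ga : (S + T)%type)).
pose g := \sum_(ga : T) mu ga *: 'X_[mon ga].
pose G := \sum_(al : S) lam al *: 'X_[mon al].
have Fg : \sum_(ga : T) mu ga *: (F * 'X_[mon ga]) = F * g.
  by rewrite /g mulr_sumr; apply: eq_bigr => ga _; rewrite scalerAr.
rewrite -/lam -/mu Fg in Zdef.
have hG : G != 0.
  apply/negP => /eqP G0.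
  have lam0 al : lam al = 0 by rewrite -(coef_sum_mon lam al) -/G G0 mcoeff0.
  have Sum0 : \sum_al lam al *: H al = 0 by apply: big1 => al _; rewrite lam0 scale0r.
  rewrite Sum0 add0r in Zdef.
  have g0 : g = 0 by move/eqP: Zdef; rewrite mulf_eq0 (negbTE F0) => /eqP.
  have mu0 ga : mu ga = 0 by rewrite -(coef_sum_mon mu ga) -/g g0 mcoeff0.
  move/negP: vnz; apply; apply/eqP/rowP => r; rewrite mxE.
  rewrite -(enum_valK r); case: (enum_val r) => [al|ga]; [exact: lam0 | exact: mu0].
have W0 : \prod_j mmap iota u (Q j) ^+ D != 0.
  by apply/prodf_neq0 => j _; rewrite expf_neq0 // (hPQ j).1.
have evH al : mmap iota u (H al) = mmap1 y (mon al) * \prod_j mmap iota u (Q j) ^+ D.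
  rewrite /H mm_prod /mmap1 -big_split /=; apply: eq_bigr => j _.
  rewrite mmM !mmXn mnmE (hPQ j).2 -/(P j) -/(Q j).
  have hQ := (hPQ j).1; rewrite -/(Q j) in hQ.
  have -> : mmap iota u (Q j) ^+ D = mmap iota u (Q j) ^+ al j * mmap iota u (Q j) ^+ (D - al j).
    by rewrite -exprD subnKC // -ltnS.
  by rewrite expr_div_n mulrA divfK // expf_neq0.
have hsum : mmap iota u (\sum_al lam al *: H al) = 0.
  by have := congr1 (mmap iota u) Zdef; rewrite mmD mm0 mmM Fu mul0r addr0.
rewrite mm_sum in hsum.
have : mmap iota y G * \prod_j mmap iota u (Q j) ^+ D = 0.
  rewrite /G mm_sum mulr_suml -[RHS]hsum; apply: eq_bigr => al _.
  by rewrite !mmZ evH mmapX mulrA.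
move/eqP; rewrite mulf_eq0 (negbTE W0) orbF => /eqP.
by apply/eqP; apply: hy.
Qed.
End Key.

Module Ord.
Import Order.TTheory.

Lemma join_cases (d : Order.disp_t) (T : orderType d) (x y : T) :
  (x `|` y)%O = x \/ (x `|` y)%O = y.
Proof.
rewrite joinEtotal /Order.max; case: ifP; auto.
Qed.

Section Norm.
Variables (k : fieldType) (m : nat) (a b : k).
Hypothesis ha : forall c : k, c ^+ 2 != a.

Lemma norm_from_poly (A B C : {mpoly k[m]}) :
  C != 0 -> A ^+ 2 - a *: B ^+ 2 = b *: C ^+ 2 ->
  exists s t : k, s ^+ 2 - a * t ^+ 2 = b.
Proof.
move=> C0 hE.
pose mu := ((mlead A *+ 2)%MM `|` (mlead B *+ 2)%MM `|` (mlead C *+ 2)%MM)%O.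
pose v (p : {mpoly k[m]}) := if (mlead p *+ 2)%MM == mu then mleadc p else 0.
have coefv p : ((mlead p *+ 2)%MM <= mu)%O -> (p ^+ 2)@_mu = v p ^+ 2.
  rewrite /v; case: eqP => [<- _|ne le]; first by rewrite mleadcX.
  rewrite expr0n /=; apply: mcoeff_gt_mlead.
  apply: le_lt_trans (mleadX_le p 2) _.
  by rewrite lt_neqAle le andbT; apply/eqP.
have leA : ((mlead A *+ 2)%MM <= mu)%O by rewrite /mu -joinA leUl.
have leB : ((mlead B *+ 2)%MM <= mu)%O by rewrite /mu (joinC (mlead A *+ 2)%MM) -joinA leUl.
have leC : ((mlead C *+ 2)%MM <= mu)%O by rewrite /mu leUr.
have hv : v A ^+ 2 - a * v B ^+ 2 = b * v C ^+ 2.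
  have := congr1 (mcoeff mu) hE; rewrite mcoeffB !mcoeffZ.
  by rewrite -/(mcoeff _ _) !coefv.
have [vC0|vC0] := eqVneq (v C) 0; last first.
  exists (v A / v C), (v B / v C).
  have -> : (v A / v C) ^+ 2 - a * (v B / v C) ^+ 2 = (v A ^+ 2 - a * v B ^+ 2) / v C ^+ 2.
    by field.
  by rewrite hv; field.
exfalso.
have vB0 : v B = 0.
  have [//|nB] := eqVneq (v B) 0; move: (ha (v A / v B)); rewrite expr_div_n.
  move: hv; rewrite vC0 expr0n /= mulr0 => /eqP; rewrite subr_eq0 => /eqP ->.
  by rewrite mulfK ?eqxx // expf_neq0.
have vA0 : v A = 0.
  by move: hv; rewrite vB0 vC0 expr0n /= !mulr0 subr0 => /eqP; rewrite expf_eq0 /= => /eqP.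
have mC : (mlead C *+ 2)%MM != mu.
  by apply/negP => /eqP e; move: vC0; rewrite /v e eqxx => /eqP; rewrite mleadc_eq0 (negbTE C0).
have zero_case p : v p = 0 -> (mlead p *+ 2)%MM = mu -> False.
  move=> vp e; move: vp; rewrite /v e eqxx => /eqP; rewrite mleadc_eq0 => /eqP p0.
  move: e; rewrite p0 mlead0 => e.
  have e0 : mu = 0%MM by rewrite -e; apply/mnmP => i; rewrite mulmnE mnm0E.
  by move: leC mC; rewrite e0 => le; rewrite eq_le le le0m.
have : mu = (mlead A *+ 2)%MM \/ mu = (mlead B *+ 2)%MM \/ mu = (mlead C *+ 2)%MM.
  rewrite /mu.
  case: (join_cases ((mlead A *+ 2)%MM `|` (mlead B *+ 2)%MM)%O (mlead C *+ 2)%MM) => ->;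
    last by right; right.
  by case: (join_cases (mlead A *+ 2)%MM (mlead B *+ 2)%MM) => ->; [left | right; left].
case=> [e|[e|e]].
- exact: (zero_case A vA0 (esym e)).
- exact: (zero_case B vB0 (esym e)).
- by move: mC; rewrite e eqxx.
Qed.

End Norm.

End Ord.
Import Ord.

Lemma norm_to_quat (k : fieldType) (a b s t : k) : (2%:R : k) != 0 ->
  (forall c, c ^+ 2 != a) -> b != 0 ->
  s ^+ 2 - a * t ^+ 2 = b -> quat_trivial a b.
Proof.
move=> h2 ha hb hst.
have [s0|sn] := eqVneq s 0.
  have a0 : a != 0 by have := ha 0; rewrite expr0n /= eq_sym.
  have t0 : t != 0.
    by apply/eqP => t0; move: hb; rewrite -hst s0 t0 expr0n /= mulr0 subr0 eqxx.
  exists ((1 + 1 / a) / 2%:R), ((1 - 1 / a) / (2%:R * t)).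
  rewrite -hst s0; field.
  by rewrite t0 a0 h2.
exists (t / s), (1 / s); rewrite -hst; field.
by [].
Qed.

Lemma quat_to_norm (k : fieldType) (a b : k) : (forall c, c ^+ 2 != a) ->
  quat_trivial a b -> exists c d : k, c ^+ 2 - a * d ^+ 2 = b.
Proof.
move=> ha [x [y h]].
have y0 : y != 0.
  apply/eqP => y0; move: h; rewrite y0 expr0n /= mulr0 addr0 => h.
  have x0 : x != 0 by apply/eqP => x0; move: h; rewrite x0 expr0n /= mulr0 => /eqP; rewrite eq_sym oner_eq0.
  have ea : a = (1 / x) ^+ 2.
    by apply: (mulIf (expf_neq0 2 x0)); rewrite h; field.
  by move: (ha (1 / x)); rewrite -ea eqxx.
have hb : b = (1 - a * x ^+ 2) / y ^+ 2 by rewrite -h; field.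
by exists (1 / y), (x / y); rewrite hb; field.
Qed.

Section Param.
Variables (k L : fieldType) (iota : {rmorphism k -> L}).
Hypothesis h2 : (2%:R : k) != 0.

Lemma two_L : (2%:R : L) != 0.
Proof. by rewrite -(rmorph_nat iota) fmorph_eq0. Qed.

Lemma param_main (A B C D s t : L) : B != 0 -> C ^+ 2 - A * D ^+ 2 = B ->
  s ^+ 2 - A * t ^+ 2 = B -> s * C - A * t * D != - B ->
  exists u : L, exists sg tu : L, (1 - A * u ^+ 2 != 0) /\
    sg = (1 + A * u ^+ 2) / (1 - A * u ^+ 2) /\ tu = u * (sg + 1) /\
    s = sg * C + A * tu * D /\ t = sg * D + tu * C.
Proof.
move=> B0 hCD hst hne.
set sg := (s * C - A * t * D) / B.
set tu := (t * C - s * D) / B.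
have sg1 : sg + 1 != 0.
  apply/eqP => e; move/eqP: hne; apply.
  have e1 : sg = -1 by apply/eqP; rewrite -addr_eq0 e.
  by rewrite -[LHS](divfK B0) -/sg e1 mulN1r.
have rel : sg ^+ 2 - A * tu ^+ 2 = 1.
  have e : (s*C - A*t*D)^+2 - A*(t*C - s*D)^+2 = (s^+2 - A*t^+2)*(C^+2 - A*D^+2) by ring.
  have -> : sg^+2 - A*tu^+2 = ((s*C - A*t*D)^+2 - A*(t*C - s*D)^+2) / B^+2.
    by rewrite /sg /tu; field.
  by rewrite e hst hCD -expr2 divff // expf_neq0.
set u := tu / (sg + 1).
have tuE : tu = u * (sg + 1) by rewrite /u divfK.
have hs : sg - 1 - A * u ^+ 2 * (sg + 1) = 0.
  apply/eqP; rewrite -(mulIr_eq0 _ (mulIf sg1)).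
  have -> : (sg - 1 - A * u ^+ 2 * (sg + 1)) * (sg + 1) = sg ^+ 2 - A * tu ^+ 2 - 1.
    by rewrite tuE; ring.
  by rewrite rel subrr.
have d0 : 1 - A * u ^+ 2 != 0.
  apply/eqP => e; have eA : A * u ^+ 2 = 1 by move/eqP: e; rewrite subr_eq0 eq_sym => /eqP.
  move: hs; rewrite eA mul1r => /eqP; rewrite (_ : sg - 1 - (sg + 1) = - 2%:R); last by ring.
  by rewrite oppr_eq0 (negbTE two_L).
have sgE : sg = (1 + A * u ^+ 2) / (1 - A * u ^+ 2).
  apply: (mulIf d0); rewrite divfK //.
  by apply/eqP; rewrite -subr_eq0; apply/eqP; rewrite -hs; ring.
exists u, sg, tu; do 3!split => //.
by split; rewrite /sg /tu -hCD; field; rewrite hCD.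
Qed.
Lemma param (a b c d : k) (s t : L) : b != 0 -> c ^+ 2 - a * d ^+ 2 = b ->
  s ^+ 2 - iota a * t ^+ 2 = iota b ->
  exists u : L, in_gen_subfield iota (fun z => z = u) s /\
                in_gen_subfield iota (fun z => z = u) t.
Proof.
move=> b0 hcd hst.
have B0 : iota b != 0 by rewrite fmorph_eq0.
have hCD : iota c ^+ 2 - iota a * iota d ^+ 2 = iota b.
  by rewrite -hcd rmorphB [iota (a * _)]rmorphM !rmorphXn.
have [c' [d' [hCD2 hne]]] : exists c' d' : k,
    iota c' ^+ 2 - iota a * iota d' ^+ 2 = iota b /\
    s * iota c' - iota a * t * iota d' != - iota b.
  case: (eqVneq (s * iota c - iota a * t * iota d) (- iota b)) => e; last first.
    by exists c, d.
  exists (- c), (- d); rewrite !rmorphN !sqrrN; split => //.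
  have -> : s * - iota c - iota a * t * - iota d = - (s * iota c - iota a * t * iota d) by ring.
  rewrite e opprK; apply/negP => /eqP e2.
  have : (2%:R : L) * iota b = 0 by rewrite mulr2n mulrDl mul1r {1}e2 addNr.
  by move/eqP; rewrite mulf_eq0 (negbTE two_L) (negbTE B0).
have [u [sg [tu [d0 [sgE [tuE [sE tE]]]]]]] := param_main B0 hCD2 hst hne.
exists u.
have gu : in_gen_subfield iota (fun z => z = u) u by apply: gen_base.
have gu2 : in_gen_subfield iota (fun z => z = u) (iota a * u ^+ 2).
  by rewrite expr2; apply: gen_mul; [apply: gen_const | apply: gen_mul].
have gsg : in_gen_subfield iota (fun z => z = u) sg.
  rewrite sgE; apply: gen_div; [apply: gen_add | apply: gen_sub] => //; apply: gen_1.
have gtu : in_gen_subfield iota (fun z => z = u) tu.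
  by rewrite tuE; apply: gen_mul => //; apply: gen_add => //; apply: gen_1.
split; [rewrite sE | rewrite tE].
  by apply: gen_add; apply: gen_mul => //; try apply: gen_mul => //; apply: gen_const.
by apply: gen_add; apply: gen_mul => //; apply: gen_const.
Qed.
End Param.

End Aux.
Import Aux Aux.Ord.
Import GRing.Theory.

Theorem theorem2p7 (k L : fieldType) (iota : {rmorphism k -> L}) (n : nat)
  (a : k) (b : 'I_n -> k) (s t : 'I_n -> L) :
  infinite_field k ->
  (2%:R : k) != 0 ->
  (forall c : k, c ^+ 2 != a) ->
  (forall i, b i != 0) ->
  generates iota (fun z => exists i, z = s i \/ z = t i) ->
  trdeg_eq iota n ->
  (forall i, s i ^+ 2 - iota a * t i ^+ 2 = iota (b i)) ->
  (k_rational iota <-> (forall i, quat_trivial a (b i))) /\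
  (stably_k_rational iota <-> (forall i, quat_trivial a (b i))) /\
  (k_unirational iota <-> (forall i, quat_trivial a (b i))).
Proof.
move=> kinf h2 ha hb hgen [[x hx] _] hrel.
have R2S : k_rational iota -> stably_k_rational iota.
  move=> hr; exists 0%N, L, idfun, (fun _ => 0); split; [|split].
  - move=> p p0; rewrite (nvar0_mpolyC p) mmapC /=.
    by apply: contraNneq p0 => e; rewrite (nvar0_mpolyC p) e.
  - by move=> y; exact: (@gen_const L L idfun _ y).
  - exact: hr.
have S2U : stably_k_rational iota -> k_unirational iota.
  by move=> [mm [M [j [y [_ [_ hrat]]]]]]; exists M, (j \o iota), j.
have U2Q : k_unirational iota -> forall i, quat_trivial a (b i).
  move=> [M [iM [f [[mm [y [hind hgenM]]] hf]]]] i.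
  pose g := (f \o iota : {rmorphism k -> M}).
  have gE c : g c = iM c by rewrite /= hf.
  have hind' : alg_indep g y.
    move=> p p0; suff -> : mmap g y p = mmap iM y p by apply: hind.
    by rewrite /mmap; apply: eq_bigr => mn _; rewrite gE.
  have hgen' : generates g (range_of y).
    move=> z P g1 g2 g3 g4 g5; apply: (hgenM z P) => // c; rewrite -gE; exact: g1.
  have [P1 [Q1 [hQ1 e1]]] := frac_repr (hgen' (f (s i))).
  have [P2 [Q2 [hQ2 e2]]] := frac_repr (hgen' (f (t i))).
  have hr := congr1 f (hrel i).
  rewrite rmorphB [f (iota a * _)]rmorphM !rmorphXn in hr.
  change (f (s i) ^+ 2 - g a * f (t i) ^+ 2 = g (b i)) in hr.
  have C0 : Q1 * Q2 != 0.
    by apply: contraNneq (mulf_neq0 hQ1 hQ2) => e; rewrite -mmM e mm0.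
  have E : (P1 * Q2) ^+ 2 - a *: (P2 * Q1) ^+ 2 = b i *: (Q1 * Q2) ^+ 2.
    apply/eqP; rewrite -subr_eq0; apply/negPn/negP => nz.
    have := hind' _ nz; rewrite !mmB !mmZ !mmXn !mmM.
    set mP1 := mmap g y P1; set mP2 := mmap g y P2.
    set mQ1 := mmap g y Q1; set mQ2 := mmap g y Q2.
    have -> : (mP1 * mQ2) ^+ 2 - g a * (mP2 * mQ1) ^+ 2 - g (b i) * (mQ1 * mQ2) ^+ 2
      = (mQ1 * mQ2) ^+ 2 * (f (s i) ^+ 2 - g a * f (t i) ^+ 2 - g (b i)).
      by rewrite e1 e2; field; rewrite hQ1 hQ2.
    by rewrite hr subrr mulr0 eqxx.
  have [s0 [t0 hst]] := norm_from_poly ha C0 E.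
  exact: (norm_to_quat h2 ha (hb i) hst).
have Q2R : (forall i, quat_trivial a (b i)) -> k_rational iota.
  move=> hq.
  have : forall i, exists u : L, in_gen_subfield iota (fun z => z = u) (s i) /\
                                 in_gen_subfield iota (fun z => z = u) (t i).
    move=> i; have [c [d hcd]] := quat_to_norm ha (hq i).
    exact: (param h2 (hb i) hcd (hrel i)).
  case/fin_all_exists => u hu.
  have hgu : generates iota (range_of u).
    apply: (gen_trans hgen) => z [i [->|->]].
      by apply: (gen_mono _ (hu i).1) => z' ->; apply: gen_base; exists i.
    by apply: (gen_mono _ (hu i).2) => z' ->; apply: gen_base; exists i.
  exists n, u; split => //.
  move=> p p0; apply/negP => /eqP hp.
  exact: (key hgu p0 hp hx).
split; [|split]; split.
- exact: (fun h => U2Q (S2U (R2S h))).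
- exact: Q2R.
- exact: (fun h => U2Q (S2U h)).
- exact: (fun h => R2S (Q2R h)).
- exact: U2Q.
- exact: (fun h => S2U (R2S (Q2R h))).
Qed.
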